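(* Let $n$ be an odd integer with $2^{k-1}<n<2^k$, where $k=\lceil\log_2 n\rceil$, and suppose $n-1>2^{k-1}$. Let $s(x)=\min_{z\in\mathbb{Z}}|x-z|$ and, for integers $m$, define $f_i(m)=\frac{s(2^{i-k+1}\cdot m)}{2^{i-k+1}}$. Then for every $0\leq i\leq k-3$, $$f_i(n+1)+f_i(n-1)=2f_i(n).$$
   Context: $s(x)$ denotes the distance from the real number $x$ to the nearest integer. *)

(* Defs.v *)
From HB Require Import structures.
From mathcomp Require Import all_boot all_order all_algebra.
From mathcomp Require Import boolp classical_sets reals.
Set Implicit Arguments. Unset Strict Implicit. Unset Printing Implicit Defensive.
Import Order.TTheory GRing.Theory Num.Theory.
Local Open Scope ring_scope.
Local Open Scope classical_set_scope.

(* s(x) = min_{z in Z} |x - z| : distance from x to the nearest integer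
   (the minimum is attained, so it equals the infimum). *)
Definition s {R : realType} (x : R) : R :=
  inf [set `|x - z%:~R| | z in [set: int]].

Definition f {R : realType} (k i : nat) (m : int) : R :=
  s ((2%:R : R) ^ (i%:Z - k%:Z + 1) * m%:~R) / (2%:R : R) ^ (i%:Z - k%:Z + 1).

(* Main.v *)
Require Import Defs.
From HB Require Import structures.
From mathcomp Require Import all_boot all_order all_algebra.
From mathcomp Require Import boolp classical_sets reals.
From mathcomp Require Import ring lra zify.
Import Order.TTheory GRing.Theory Num.Theory.
Local Open Scope ring_scope.

Lemma s_eq (R : realType) (x : R) (z : int) :
  (forall w : int, `|x - z%:~R| <= `|x - w%:~R|) -> s x = `|x - z%:~R|.
Proof.
move=> H; rewrite /s; apply/le_anti/andP; split.
  apply: ge_inf; last by exists z.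
  by exists 0 => _ [w _ <-].
apply: lb_le_inf; first by exists `|x - z%:~R|, z.
by move=> _ [w _ <-].
Qed.

Lemma s_near (R : realType) (x : R) (z : int) :
  `|x - z%:~R| <= 1/2 -> s x = `|x - z%:~R|.
Proof.
move=> H; apply: s_eq => w.
have [->|nzw] := eqVneq w z; first by [].
have h1 : 1 <= `|(z - w)%:~R : R|.
  by rewrite -intr_norm ler1z -gtz0_ge1 normr_gt0 subr_eq0 eq_sym nzw.
have h2 : `|(z - w)%:~R : R| <= `|x - z%:~R| + `|x - w%:~R|.
  rewrite intrB (_ : z%:~R - w%:~R = (x - w%:~R) - (x - z%:~R)); last by ring.
  by apply: (le_trans (ler_normB _ _)); rewrite addrC.
move: h1 h2 H; set a := `|_ - z%:~R|; set b := `|_ - w%:~R|; set c := `|_|. lra.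
Qed.

Lemma fval (R : realType) (q : int) (t N : nat) :
  (0 < N)%N -> (t <= N.*2)%N ->
  s ((q%:~R * (N.*2)%:R + t%:R) / (N.*2)%:R) * (N.*2)%:R =
  (if (t <= N)%N then t%:R else (N.*2)%:R - t%:R : R).
Proof.
move=> N0 tle.
have dpos : (0 : R) < (N.*2)%:R by rewrite ltr0n double_gt0.
have e : (q%:~R * (N.*2)%:R + t%:R) / (N.*2)%:R = q%:~R + t%:R / (N.*2)%:R :> R.
  by rewrite mulrDl mulfK // gt_eqF.
rewrite e.
have tle' : (t%:R : R) <= (N.*2)%:R by rewrite ler_nat.
have hN : (N.*2)%:R = 2 * (N%:R) :> R by rewrite -muln2 natrM mulrC.
case: ifP => tN.
  have tN' : (t%:R : R) <= N%:R by rewrite ler_nat.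
  rewrite (@s_near R _ q); last first.
    rewrite addrC addKr ger0_norm ?divr_ge0 // ler_pdivrMr // hN. lra.
  by rewrite addrC addKr ger0_norm ?divr_ge0 // mulfVK // gt_eqF.
have tN' : (N%:R : R) <= t%:R by rewrite ler_nat; lia.
have ee : q%:~R + t%:R / (N.*2)%:R - (q + 1)%:~R = - (((N.*2)%:R - t%:R) / (N.*2)%:R) :> R.
  rewrite intrD mulrBl divff ?gt_eqF //; ring.
rewrite (@s_near R _ (q + 1)) ee normrN ger0_norm ?divr_ge0 ?subr_ge0 //.
  by rewrite mulfVK // gt_eqF.
rewrite ler_pdivrMr // hN. lra.
Qed.

Theorem lemma5 (R : realType) (n k : nat) :
  odd n ->
  (2 ^ k.-1 < n < 2 ^ k)%N ->
  k = up_log 2 n ->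
  (2 ^ k.-1 < n.-1)%N ->
  forall i : nat, (i + 3 <= k)%N ->
    f (R := R) k i (n%:Z + 1) + f k i (n%:Z - 1) = 2 * f k i n%:Z.
Proof.
move=> on _ _ _ i ik.
set j := (k - i - 2)%N.
set N := (2 ^ j)%N.
have N0 : (0 < N)%N by rewrite expn_gt0.
have Nev : ~~ odd N by rewrite /N oddX; lia.
have ex : (i%:Z - k%:Z + 1) = - (j.+1 : int) :> int by rewrite /j; lia.
have dN : (2 : R) ^+ j.+1 = (N.*2)%:R by rewrite -muln2 natrM exprSr natrX.
have fE : forall m : int, f (R := R) k i m = s (m%:~R / (N.*2)%:R) * (N.*2)%:R.
  move=> m; rewrite /f ex -exprnN dN invrK.
  rewrite [X in s X]mulrC; ring.
set d := N.*2.
have dpos : (0 < d)%N by rewrite /d double_gt0.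
have nE := divn_eq n d.
set q := (n %/ d)%N in nE. set r := (n %% d)%N in nE.
have rd : (r < d)%N by rewrite ltn_mod.
have ro : odd r by rewrite /r odd_mod // /d odd_double.
have r1 : (1 <= r)%N by case: (r) ro.
have rN : r != N by apply/eqP => e; move: ro; rewrite e (negbTE Nev).
have e0 : (n%:Z%:~R : R) = (q%:Z)%:~R * (N.*2)%:R + r%:R.
  by rewrite -[in LHS]pmulrn nE natrD natrM.
have e1 : ((n%:Z + 1)%:~R : R) = (q%:Z)%:~R * (N.*2)%:R + (r.+1)%:R.
  by rewrite intrD e0 -natr1 addrA.
have e2 : ((n%:Z - 1)%:~R : R) = (q%:Z)%:~R * (N.*2)%:R + (r.-1)%:R.
  by rewrite intrB e0 -[in LHS](prednK r1) -natr1 addrA addrK.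
have Rp : ((r.-1)%:R : R) = r%:R - 1.
  by rewrite -[in RHS](prednK r1) -natr1 addrK.
have hN : (N.*2)%:R = 2 * (N%:R) :> R by rewrite -muln2 natrM mulrC.
rewrite !fE e0 e1 e2 !fval //; try (rewrite /d in rd; lia).
rewrite -natr1 Rp hN.
have [h|h] : (r < N)%N \/ (N < r)%N by move/eqP: rN; lia.
- rewrite h.
  rewrite (_ : (r.-1 <= N)%N = true); last by lia.
  rewrite (_ : (r <= N)%N = true); last by lia.
  lra.
- rewrite (_ : (r < N)%N = false); last by lia.
  rewrite (_ : (r <= N)%N = false); last by lia.
  case: ifP => H.
    have e : r.-1 = N by lia.
    have : ((r.-1)%:R : R) = N%:R by rewrite e.
    rewrite Rp; lra.
  lra.
Qed.
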